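(* Let $P\mapsto\nu_P(\cdot\mid x)$ be a rule assigning to each observed-data law $P$ of $O=(X,A,W,Y)$ a conditional distribution on $W$ given $X=x$, and suppose the rule is outcome-free: whenever $P_{XAW}=P'_{XAW}$ (equal marginal laws of $(X,A,W)$), $\nu_P(\cdot\mid x)=\nu_{P'}(\cdot\mid x)$ for $P_X$-almost every $x$. Define $\Psi_\nu(P):=\mathbb{E}_P\!\left[\int\Delta(w,X)\,\mathrm{d}\nu_P(w\mid X)\right]$. If $\Psi_\nu(P)=\theta_{\mathrm{ATE}}$ for every confounder-model law $P$ satisfying positivity and the confounder-model assumptions, then for every observed-data law $P$ satisfying positivity, $\nu_P(\cdot\mid X)=F_{W\mid X}(\cdot\mid X)$ $P$-almost surely, and consequently $\Psi_\nu(P)=\mathbb{E}_P\{\Delta(W,X)\}=\psi(P)$. Hence $\psi(P)$ is the unique functional of the form $P\mapsto\mathbb{E}_P[\int\Delta(w,X)\,\mathrm{d}\nu_P(w\mid X)]$ with $\nu_P$ outcome-free that coincides with the average treatment effect under the confounder model.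
   Context: $A\in\{0,1\}$; $Q(a,w,x)=\mathbb{E}_P(Y\mid A=a,W=w,X=x)$, $\Delta(w,x)=Q(1,w,x)-Q(0,w,x)$, $\psi(P)=\mathbb{E}_P\{\Delta(W,X)\}$; $F_{W\mid X}$ is the conditional law of $W$ given $X$ under $P$. Positivity: $0<\mathbb{P}(A=1\mid X=x,W=w)<1$ for $P$-a.e. $(x,w)$. Confounder-model assumptions ($W$ pre-exposure, potential outcomes $Y^{(0)},Y^{(1)}$): if $A=a$ then $Y=Y^{(a)}$ a.s.; $Y^{(a)}\perp\!\!\!\perp A\mid(X,W)$ for $a\in\{0,1\}$; $\theta_{\mathrm{ATE}}=\mathbb{E}\{Y^{(1)}-Y^{(0)}\}$. *)

(* Defs.v *)
From mathcomp Require Import all_boot all_algebra.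
From mathcomp Require Import all_classical all_reals all_analysis.
Import GRing.Theory Num.Theory.
Set Implicit Arguments.
Unset Strict Implicit.
Unset Printing Implicit Defensive.
Local Open Scope classical_set_scope.
Local Open Scope ring_scope.

Section Defs.
Context {R : realType} {dX dW : measure_display}
  {X : measurableType dX} {W : measurableType dW}.

Definition Obs := (X * bool * W * R)%type.
(* Full data (X, A, W, Y^(0), Y^(1)), stored as (((x, a), w), (y0, y1)). *)
Definition Full := (X * bool * W * (R * R))%type.

Definition oX (o : Obs) : X := o.1.1.1.
Definition oA (o : Obs) : bool := o.1.1.2.
Definition oW (o : Obs) : W := o.1.2.
Definition oY (o : Obs) : R := o.2.
Definition oXAW (o : Obs) : X * bool * W := o.1.
Definition oXW (o : Obs) : X * W := (o.1.1.1, o.1.2).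

Definition cexp_version {dT dS} {T : measurableType dT} {S : measurableType dS}
  (P : probability T R) (G : T -> S) (f : T -> R) (h : S -> R) : Prop :=
  measurable_fun setT h /\ P.-integrable setT (EFin \o f) /\
  forall B, measurable B ->
    (\int[P]_(t in G @^-1` B) (f t)%:E = \int[P]_(t in G @^-1` B) (h (G t))%:E)%E.

Definition propensity_version (P : probability Obs R) (e : X * W -> R) : Prop :=
  cexp_version P oXW (fun o => if oA o then 1 else 0) e.

Definition positivity (P : probability Obs R) : Prop :=
  exists e, propensity_version P e /\ {ae P, forall o, 0 < e (oXW o) < 1}.

Definition regression_version (P : probability Obs R) (Q : bool -> W -> X -> R) : Prop :=
  cexp_version P oXAW oY (fun t => Q t.1.2 t.2 t.1.1).

Definition Delta (Q : bool -> W -> X -> R) (w : W) (x : X) : R := Q true w x - Q false w x.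

Definition cond_dist_version (P : probability Obs R) (F : R.-pker X ~> W) : Prop :=
  forall B C, measurable B -> measurable C ->
    P (oX @^-1` B `&` oW @^-1` C) = (\int[P]_(o in oX @^-1` B) F (oX o) C)%E.

Definition Psi (nu : probability Obs R -> R.-pker X ~> W)
  (P : probability Obs R) (Q : bool -> W -> X -> R) : \bar R :=
  (\int[P]_o (\int[nu P (oX o)]_w (Delta Q w (oX o))%:E))%E.

Definition outcome_free (nu : probability Obs R -> R.-pker X ~> W) : Prop :=
  forall P P' : probability Obs R,
    (forall S : set (X * bool * W), measurable S ->
        P (oXAW @^-1` S) = P' (oXAW @^-1` S)) ->
    {ae P, forall o, forall C, measurable C -> nu P (oX o) C = nu P' (oX o) C}.

(* Observation map: Y = Y^(A) (consistency). *)
Definition observe (u : Full) : Obs := (u.1, if u.1.1.2 then u.2.2 else u.2.1).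

Definition observed_law (Pf : probability Full R) (P : probability Obs R) : Prop :=
  forall S, measurable S -> P S = Pf (observe @^-1` S).

Definition cond_indep {dS} {S : measurableType dS} (Pf : probability Full R)
  (Yv : Full -> R) (Av : Full -> bool) (G : Full -> S) : Prop :=
  forall (B : set R) (C : set bool), measurable B -> measurable C ->
    exists h1 h2,
      cexp_version Pf G (fun u => \1_B (Yv u)) h1 /\
      cexp_version Pf G (fun u => \1_C (Av u)) h2 /\
      cexp_version Pf G (fun u => \1_B (Yv u) * \1_C (Av u)) (h1 \* h2).

Definition fY0 (u : Full) : R := u.2.1.
Definition fY1 (u : Full) : R := u.2.2.
Definition fA (u : Full) : bool := u.1.1.2.
Definition fXW (u : Full) : X * W := (u.1.1.1, u.1.2).

(* Confounder model: potential outcomes integrable (so theta_ATE is defined),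
   and Y^(a) _||_ A | (X, W) for a in {0,1}.  Consistency is built into
   [observe]. *)
Definition confounder_model (Pf : probability Full R) : Prop :=
  Pf.-integrable setT (EFin \o fY0) /\ Pf.-integrable setT (EFin \o fY1) /\
  forall a : bool, cond_indep Pf (if a then fY1 else fY0) fA fXW.

Definition theta_ATE (Pf : probability Full R) : \bar R :=
  (\int[Pf]_u (fY1 u - fY0 u)%:E)%E.

(* The sigma-algebra of W is countably generated (true for Euclidean W). *)
Definition countably_generated : Prop :=
  exists G : nat -> set W, (@measurable _ W) = <<s range G >>.

End Defs.

(* Main.v *)
Require Import Defs.
From mathcomp Require Import all_boot all_algebra.
From mathcomp Require Import all_classical all_reals all_analysis.
From mathcomp Require Import measurable_realfun.
From mathcomp Require Import order.
Import Order.TTheory GRing.Theory Num.Theory.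
Local Open Scope classical_set_scope.
Local Open Scope ring_scope.

Section pf.
Context (R : realType) d1 d2 (T1 : measurableType d1) (T2 : measurableType d2).
Local Open Scope ereal_scope.
Lemma integral_distr (P : probability T1 R) (phi : {mfun T1 >-> T2}) (D : set T2)
   (f : T2 -> \bar R) : measurable D -> measurable_fun D f ->
  \int[distribution P phi]_(y in D) f y = \int[P]_(x in phi @^-1` D) f (phi x).
Proof.
move=> mD mf.
transitivity (\int[P]_(x in phi @^-1` D) (f^\+ \o phi) x - \int[P]_(x in phi @^-1` D) (f^\- \o phi) x).
  rewrite integralE; congr (_ - _).
    have h := (@ge0_integral_pushforward _ _ _ _ R phi (measurable_funPT phi) P D (f^\+) mD).
    rewrite -h //.
      exact: measurable_funepos.
  have h := (@ge0_integral_pushforward _ _ _ _ R phi (measurable_funPT phi) P D (f^\-) mD).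
  rewrite -h //.
    exact: measurable_funeneg.
rewrite [RHS]integralE; congr (_ - _); apply: eq_integral => x _ /=; by rewrite !(funeposE, funenegE).
Qed.

Lemma integrable_distr (P : probability T1 R) (phi : {mfun T1 >-> T2})
   (f : T2 -> \bar R) : measurable_fun setT f -> P.-integrable setT (f \o phi) ->
  (distribution P phi).-integrable setT f.
Proof.
move=> mf /integrableP [_ fi]; apply/integrableP; split => //.
rewrite integral_distr //.
exact: measurableT_comp.
Qed.

Lemma mpre (f : T1 -> T2) : measurable_fun setT f -> forall B, measurable B -> measurable (f @^-1` B).
Proof. by move=> mf B mB; rewrite -[X in measurable X]setTI; exact: mf. Qed.

Lemma int_bnd (P : probability T1 R) (f : T1 -> R) : measurable_fun setT f ->
  (forall x, (`|f x| <= 1)%R) -> P.-integrable setT (EFin \o f).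
Proof.
move=> mf fb.
have h1 := @finite_measure_integrable_cst _ _ R P setT 1%R measurableT.
apply: le_integrable h1 => //.
  exact: measurableT_comp.
by move=> x _ /=; rewrite lee_fin normr1.
Qed.
Lemma mind d (T : measurableType d) (U : set T) : measurable U -> measurable_fun setT (\1_U : T -> R).
Proof. by move=> mU; apply: measurable_indic. Qed.
End pf.
Arguments mind {R d T U}.
Arguments integral_distr {R d1 d2 T1 T2} P phi {D f}.
Arguments mpre {d1 d2 T1 T2} f.

Section S.
Context (R : realType) (dX dW : measure_display) (X : measurableType dX) (W : measurableType dW).
Local Notation Obs := (@Obs R _ _ X W).
Local Notation Full := (@Full R _ _ X W).

Lemma moX : measurable_fun setT (@oX R _ _ X W).
Proof. rewrite /oX. apply: measurableT_comp => //. apply: measurableT_comp => //. Qed.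
Lemma moW : measurable_fun setT (@oW R _ _ X W).
Proof. rewrite /oW. apply: measurableT_comp => //. Qed.
Lemma moA : measurable_fun setT (@oA R _ _ X W).
Proof. rewrite /oA. apply: measurableT_comp => //. apply: measurableT_comp => //. Qed.
Lemma moXW : measurable_fun setT (@oXW R _ _ X W).
Proof. exact: (@measurable_fun_pair _ _ _ _ _ _ oX oW moX moW). Qed.
Lemma mfXW : measurable_fun setT (@fXW R _ _ X W).
Proof.
apply: (@measurable_fun_pair _ _ _ _ _ _ (fun u : Full => u.1.1.1) (fun u : Full => u.1.2)).
  apply: measurableT_comp => //. apply: measurableT_comp => //.
apply: measurableT_comp => //.
Qed.

Lemma mker (k : R.-pker X ~> W) (f : X * W -> R) : measurable_fun setT f ->
  measurable_fun [set: X] (fun x => (\int[k x]_w (f (x, w))%:E : \bar R))%E.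
Proof.
move=> mf.
have -> : (fun x => \int[k x]_w (f (x, w))%:E)%E = ((fun x => \int[k x]_w ((EFin \o f)^\+ (x, w))) \- (fun x => \int[k x]_w ((EFin \o f)^\- (x, w))))%E.
  apply/funext => x; rewrite integralE; congr (_ - _)%E; apply: eq_integral => w _; by rewrite !(funeposE, funenegE).
apply: emeasurable_funB.
  apply: (@measurable_fun_integral_finite_kernel _ _ X W R _ k) => //.
  exact/measurable_funepos/measurableT_comp.
apply: (@measurable_fun_integral_finite_kernel _ _ X W R _ k) => //.
exact/measurable_funeneg/measurableT_comp.
Qed.

Section core.
Variables (P : probability Obs R) (g : X * W -> R).
Hypotheses (mg : measurable_fun setT g) (ig : P.-integrable setT (fun o => (g (oXW o))%:E)).

Definition hF (o : Obs) : Full := (o.1, (0, g (oXW o))).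
Definition hO (o : Obs) : Obs := (o.1, if oA o then g (oXW o) else 0).

Lemma mhF : measurable_fun setT hF.
Proof.
rewrite /hF; apply: measurable_fun_pair => //.
apply: measurable_fun_pair => //.
exact: measurableT_comp mg moXW.
Qed.

Lemma mhO : measurable_fun setT hO.
Proof.
rewrite /hO; apply: measurable_fun_pair => //.
apply: measurable_fun_ifT; first exact: moA.
  exact: measurableT_comp mg moXW.
exact: measurable_cst.
Qed.

Definition HF : {mfun Obs >-> Full} := mfun_Sub (mem_set mhF).
Definition HO : {mfun Obs >-> Obs} := mfun_Sub (mem_set mhO).
Definition Pf : probability Full R := distribution P HF.
Definition P' : probability Obs R := distribution P HO.
Definition Q' (a : bool) (w : W) (x : X) : R := if a then g (x, w) else 0.

Lemma obs_ok : observed_law Pf P'.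
Proof. by move=> S mS. Qed.

Lemma marg_ok S : measurable S -> P' (oXAW @^-1` S) = P (oXAW @^-1` S).
Proof. by []. Qed.

Lemma mQ' : measurable_fun setT (fun t : X * bool * W => Q' t.1.2 t.2 t.1.1).
Proof.
rewrite /Q'.
apply: (@measurable_fun_ifT _ _ _ _ (fun t : X * bool * W => g (t.1.1, t.2)) (fun=> 0) (fun t => t.1.2)).
- exact: (measurableT_comp measurable_snd measurable_fst).
- apply: measurableT_comp mg _.
  apply: (@measurable_fun_pair _ _ _ _ _ _ (fun t : X * bool * W => t.1.1) (fun t => t.2)).
    exact: (measurableT_comp measurable_fst measurable_fst).
  exact: measurable_snd.
- exact: measurable_cst.
Qed.

Lemma reg_ok : regression_version P' Q'.
Proof.
split; first exact: mQ'.
split.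
  apply: integrable_distr.
    by apply/measurable_EFinP; exact: measurable_snd.
  apply: le_integrable ig => //.
    apply/measurable_EFinP; apply: measurableT_comp; first exact: measurable_snd.
    exact: measurable_funPT.
  move=> o _ /=; rewrite /hO /oY /=; case: (oA o) => //=.
  by rewrite lee_fin normr0 normr_ge0.
move=> B mB.
have mB' : measurable (@oXAW R _ _ X W @^-1` B) := mpre _ measurable_fst _ mB.
rewrite /P' (integral_distr _ _ mB'); last first.
  by apply: measurable_funTS; apply/measurable_EFinP; exact: measurable_snd.
rewrite (integral_distr _ _ mB'); last first.
  apply: measurable_funTS; apply/measurable_EFinP.
  exact: (measurableT_comp mQ' measurable_fst).
reflexivity.
Qed.

Lemma pos_ok : positivity P -> positivity P'.
Proof.
case=> e [[me [ie ve]] ae]; exists e; split.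
  split => //; split.
    apply: integrable_distr => //.
    apply/measurable_EFinP; apply: measurable_fun_ifT => //; exact: moA.
  move=> B mB.
  have mB' : measurable (@oXW R _ _ X W @^-1` B) := mpre _ moXW _ mB.
  rewrite /P' (integral_distr _ _ mB'); last first.
    apply: measurable_funTS; apply/measurable_EFinP; apply: measurable_fun_ifT => //; exact: moA.
  rewrite (integral_distr _ _ mB'); last first.
    by apply: measurable_funTS; apply/measurable_EFinP; exact: measurableT_comp me moXW.
  exact: ve.
set A := [set o : Obs | ~ (0 < e (oXW o) < 1)].
have mA : measurable A.
  have -> : A = (e \o oXW) @^-1` (~` `]0, 1[%classic).
    by apply/seteqP; split => o /=; rewrite in_itv /=.
  apply: (mpre _ (measurableT_comp me moXW)).
  exact: measurableC.
case: ae => N [mN PN sN].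
exists A; split => //.
change (P A = 0%E).
apply: (subset_measure0 mA mN) => // o Ao; apply: sN; exact: Ao.
Qed.

Lemma e_int e : propensity_version P e -> {ae P, forall o, 0 < e (oXW o) < 1} ->
  P.-integrable setT (fun o => (e (oXW o))%:E).
Proof.
move=> [me [ie ve]] ae.
have mE : measurable_fun setT (fun o : Obs => (e (oXW o))%:E).
  by apply/measurable_EFinP; exact: measurableT_comp me moXW.
apply/integrableP; split => //.
rewrite (ae_eq_integral (fun o => (e (oXW o))%:E)) //; last first.
  - apply: filterS ae => o /andP[e0 _] _.
    by rewrite gee0_abs // lee_fin ltW.
  - exact: measurableT_comp.
have := ve setT measurableT; rewrite preimage_setT => <-.
exact: integrable_lty.
Qed.

Lemma h2_ok e : propensity_version P e -> {ae P, forall o, 0 < e (oXW o) < 1} ->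
  forall C : set bool, exists h2 : X * W -> R, measurable_fun setT h2 /\
  forall D, measurable D ->
   (\int[P]_(o in oXW @^-1` D) (\1_C (oA o))%:E = \int[P]_(o in oXW @^-1` D) (h2 (oXW o))%:E)%E.
Proof.
move=> pv ae C.
have eint := @e_int e pv ae.
case: pv => me [ie ve].
have : C `<=` [set true; false] by rewrite -setT_bool.
move/subset_set2 => [->|->|->|->].
- exists (cst 0); split => // D mD; apply: eq_integral => o _; by rewrite indic0.
- exists e; split => // D mD; rewrite -(ve D mD); apply: eq_integral => o _.
  rewrite indicE; case: (oA o) => /=.
    by rewrite mem_set.
  by rewrite memNset.
- exists (fun s => 1 - e s); split.
    apply: measurable_funB => //.
  move=> D mD.
  have mD' : measurable (@oXW R _ _ X W @^-1` D) := mpre _ moXW _ mD.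
  have i1 : P.-integrable (oXW @^-1` D) (EFin \o cst 1) := finite_measure_integrable_cst P 1 mD'.
  have iA : P.-integrable (oXW @^-1` D) (EFin \o (fun o : Obs => if oA o then 1 else 0)) :=
    integrableS measurableT mD' (@subsetT _ _) ie.
  have iE : P.-integrable (oXW @^-1` D) (fun o : Obs => (e (oXW o))%:E) :=
    integrableS measurableT mD' (@subsetT _ _) eint.
  transitivity (\int[P]_(o in oXW @^-1` D) ((EFin \o cst 1%R) \- (EFin \o (fun o : Obs => if oA o then 1%R else 0%R))) o)%E.
    apply: eq_integral => o _ /=; rewrite indicE; case: (oA o) => /=.
      by rewrite memNset //= EFinN subee.
    by rewrite mem_set //= oppr0 adde0.
  rewrite integralB // (ve D mD) -integralB //.
- exists (cst 1); split => // D mD; apply: eq_integral => o _.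
  by rewrite -setT_bool indicT.
Qed.

Lemma prod_ok (u : X * W -> R) (mu : measurable_fun setT u) (B : set R) (mB : measurable B)
  (v : Obs -> R) D (mD : measurable D) :
  (\int[P]_(o in oXW @^-1` D) (\1_B (u (oXW o)) * v o)%:E =
   \int[P]_(o in oXW @^-1` (D `&` u @^-1` B)) (v o)%:E)%E.
Proof.
rewrite preimage_setI integral_mkcondr.
apply: eq_integral => o _; rewrite patchE indicE.
case: (boolP (u (oXW o) \in B)) => h.
  rewrite mem_set; first by rewrite mul1r.
  exact: set_mem h.
rewrite memNset; first by rewrite mul0r.
move=> Bo; move/negP: h; apply; exact: mem_set.
Qed.

Lemma ind1 (T : Type) (A : set T) x : `|\1_A x| <= 1 :> R.
Proof. by rewrite indicE; case: (x \in A); rewrite ?normr1 ?normr0. Qed.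

Lemma mfA : measurable_fun setT (@fA R _ _ X W).
Proof. rewrite /fA. apply: measurableT_comp => //. apply: measurableT_comp => //. Qed.

Lemma key (Yv : Full -> R) (yv : X * W -> R) : measurable_fun setT yv ->
  measurable_fun setT Yv -> (forall o, Yv (HF o) = yv (oXW o)) -> positivity P ->
  cond_indep Pf Yv fA fXW.
Proof.
move=> myv mYv hY [e [pv ae]] B C mB mC.
have [h2 [mh2 eh2]] := @h2_ok e pv ae C.
exists (fun s => \1_B (yv s)), h2.
have mYB : measurable_fun setT (fun u : Full => \1_B (Yv u) : R) :=
  measurableT_comp (mind mB) mYv.
have mAC : measurable_fun setT (fun u : Full => \1_C (fA u) : R) :=
  measurableT_comp (mind mC) mfA.
have myB : measurable_fun setT (fun s => \1_B (yv s) : R) :=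
  measurableT_comp (mind mB) myv.
split; [|split].
- split => //; split.
    apply: integrable_distr; first by apply/measurable_EFinP.
    apply: (@int_bnd _ _ _ P (fun o => \1_B (Yv (HF o)))).
      exact: measurableT_comp mYB (measurable_funPT HF).
    move=> o; exact: ind1.
  move=> B' mB'.
  have m' : measurable (@fXW R _ _ X W @^-1` B') := mpre _ mfXW _ mB'.
  rewrite /Pf (integral_distr _ _ m'); last exact/measurable_funTS/measurable_EFinP.
  rewrite (integral_distr _ _ m'); last first.
    by apply/measurable_funTS/measurable_EFinP; exact: measurableT_comp myB mfXW.
  apply: eq_integral => o _ /=; by rewrite hY.
- split => //; split.
    apply: integrable_distr; first by apply/measurable_EFinP.
    apply: (@int_bnd _ _ _ P (fun o => \1_C (oA o))).
      exact: measurableT_comp (mind mC) moA.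
    move=> o; exact: ind1.
  move=> B' mB'.
  have m' : measurable (@fXW R _ _ X W @^-1` B') := mpre _ mfXW _ mB'.
  rewrite /Pf (integral_distr _ _ m'); last exact/measurable_funTS/measurable_EFinP.
  rewrite (integral_distr _ _ m'); last first.
    by apply/measurable_funTS/measurable_EFinP; exact: measurableT_comp mh2 mfXW.
  exact: eh2.
- split; first exact: measurable_funM.
  split.
    apply: integrable_distr; first by apply/measurable_EFinP; exact: measurable_funM.
    apply: (@int_bnd _ _ _ P (fun o => \1_B (Yv (HF o)) * \1_C (oA o))).
      apply: measurable_funM; first exact: measurableT_comp mYB (measurable_funPT HF).
      exact: measurableT_comp (mind mC) moA.
    move=> o; rewrite normrM; apply: mulr_ile1 => //; exact: ind1.
  move=> B' mB'.
  have m' : measurable (@fXW R _ _ X W @^-1` B') := mpre _ mfXW _ mB'.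
  rewrite /Pf (integral_distr _ _ m'); last first.
    by apply/measurable_funTS/measurable_EFinP; exact: measurable_funM.
  rewrite (integral_distr _ _ m'); last first.
    by apply/measurable_funTS/measurable_EFinP; apply: measurableT_comp mfXW; exact: measurable_funM.
  transitivity (\int[P]_(o in oXW @^-1` B') (\1_B (yv (oXW o)) * \1_C (oA o))%:E)%E.
    apply: eq_integral => o _ /=; by rewrite hY.
  have mI : measurable (B' `&` yv @^-1` B) := measurableI _ _ mB' (mpre _ myv _ mB).
  rewrite (@prod_ok yv myv B mB (fun o => \1_C (oA o)) B' mB') (eh2 _ mI).
  by rewrite -(@prod_ok yv myv B mB (fun o => h2 (oXW o)) B' mB').
Qed.

Lemma conf_ok : positivity P -> confounder_model Pf.
Proof.
move=> pos; split; [|split].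
- apply: integrable_distr.
    by apply/measurable_EFinP; exact: (measurableT_comp measurable_fst measurable_snd).
  exact: (@finite_measure_integrable_cst _ _ R P setT 0%R measurableT).
- apply: integrable_distr; last exact: ig.
  by apply/measurable_EFinP; exact: (measurableT_comp measurable_snd measurable_snd).
- case.
  + apply: (@key fY1 g mg) => //.
    exact: (measurableT_comp measurable_snd measurable_snd).
  + apply: (@key fY0 (cst 0)) => //.
    exact: (measurableT_comp measurable_fst measurable_snd).
Qed.

Lemma core (nu : probability Obs R -> R.-pker X ~> W) :
  outcome_free nu ->
  (forall (Pf : probability Full R) (P : probability Obs R),
      confounder_model Pf -> observed_law Pf P -> positivity P ->
      forall Q, regression_version P Q -> Psi nu P Q = theta_ATE Pf) ->
  positivity P ->
  (\int[P]_o (\int[nu P (oX o)]_w (g (oX o, w))%:E) = \int[P]_o (g (oXW o))%:E)%E.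
Proof.
move=> ofree H pos.
have := H Pf P' (conf_ok pos) obs_ok (pos_ok pos) Q' reg_ok.
rewrite /Psi /theta_ATE.
have mD : measurable_fun setT (fun p : X * W => Delta Q' p.2 p.1).
  have -> : (fun p : X * W => Delta Q' p.2 p.1) = g.
    by apply/funext => -[x w]; rewrite /Delta /Q' /= subr0.
  exact: mg.
have mK : forall Z, measurable_fun setT
    (fun o : Obs => \int[nu Z (oX o)]_w (Delta Q' w (oX o))%:E)%E :=
  fun Z => measurableT_comp (@mker (nu Z) _ mD) moX.
have E1 : (\int[P']_o (\int[nu P' (oX o)]_w (Delta Q' w (oX o))%:E) =
           \int[P]_o (\int[nu P (oX o)]_w (g (oX o, w))%:E))%E.
  transitivity (\int[P']_o (\int[nu P (oX o)]_w (Delta Q' w (oX o))%:E))%E.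
    apply: ae_eq_integral => //.
    have := ofree P' P marg_ok.
    apply: filterS => o Ho _.
    apply: eq_measure_integral => C mC _; by rewrite Ho.
  rewrite /P' (integral_distr _ _ measurableT); last exact: mK.
  rewrite preimage_setT.
  apply: eq_integral => o _; apply: eq_integral => w _.
  by rewrite /Delta /Q' /= subr0.
have E2 : (\int[Pf]_u (fY1 u - fY0 u)%:E = \int[P]_o (g (oXW o))%:E)%E.
  rewrite /Pf (integral_distr _ _ measurableT); last first.
    apply/measurable_EFinP; apply: measurable_funB.
      exact: (measurableT_comp measurable_snd measurable_snd).
    exact: (measurableT_comp measurable_fst measurable_snd).
  rewrite preimage_setT.
  apply: eq_integral => o _.
  by rewrite /= subr0.
by rewrite E1 E2.
Qed.

End core.

Section final.
Variable nu : probability Obs R -> R.-pker X ~> W.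
Hypothesis ofree : outcome_free nu.
Hypothesis H : forall (Pf : probability Full R) (P : probability Obs R),
      confounder_model Pf -> observed_law Pf P -> positivity P ->
      forall Q, regression_version P Q -> Psi nu P Q = theta_ATE Pf.
Variable P : probability Obs R.
Hypothesis pos : positivity P.

Lemma part2 Q : regression_version P Q ->
  P.-integrable setT (fun o => (Delta Q (oW o) (oX o))%:E) ->
  Psi nu P Q = (\int[P]_o (Delta Q (oW o) (oX o))%:E)%E.
Proof.
move=> [mQ _] iQ.
have m1 : measurable_fun setT (fun p : X * W => Q true p.2 p.1) :=
  measurableT_comp mQ (measurable_fun_pair (measurable_fun_pair measurable_fst (measurable_cst true)) measurable_snd).
have m0 : measurable_fun setT (fun p : X * W => Q false p.2 p.1) :=
  measurableT_comp mQ (measurable_fun_pair (measurable_fun_pair measurable_fst (measurable_cst false)) measurable_snd).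
have mg : measurable_fun setT (fun p : X * W => Delta Q p.2 p.1).
  exact: measurable_funB.
exact: (@core P (fun p => Delta Q p.2 p.1) mg iQ nu ofree H pos).
Qed.

Lemma part1C F : cond_dist_version P F -> forall C, measurable C ->
  \forall o \ae P, nu P (oX o) C = F (oX o) C.
Proof.
move=> hF C mC.
pose PX : probability X R := distribution P (mfun_Sub (mem_set moX)).
have mp1 : measurable_fun setT (fun x => nu P x C) := measurable_kernel (nu P) C mC.
have mp2 : measurable_fun setT (fun x => F x C) := measurable_kernel F C mC.
have key : forall B, measurable B ->
    (\int[PX]_(x in B) nu P x C = \int[PX]_(x in B) F x C)%E.
  move=> B mB.
  rewrite /PX (integral_distr _ _ mB); last exact: measurable_funTS.
  rewrite (integral_distr _ _ mB); last exact: measurable_funTS.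
  rewrite -(hF B C mB mC).
  have mg : measurable_fun setT (fun p : X * W => \1_B p.1 * \1_C p.2 : R).
    apply: measurable_funM.
      exact: measurableT_comp (mind mB) measurable_fst.
    exact: measurableT_comp (mind mC) measurable_snd.
  have ig : P.-integrable setT (fun o => (\1_B (oX o) * \1_C (oW o))%:E).
    apply: (@int_bnd _ _ _ P (fun o => \1_B (oX o) * \1_C (oW o))).
      apply: measurable_funM.
        exact: measurableT_comp (mind mB) moX.
      exact: measurableT_comp (mind mC) moW.
    by move=> o; rewrite normrM; apply: mulr_ile1 => //; exact: ind1.
  have := @core P (fun p => \1_B p.1 * \1_C p.2) mg ig nu ofree H pos.
  have -> : (\int[P]_o (\int[nu P (oX o)]_w (\1_B (oX o, w).1 * \1_C (oX o, w).2)%:E) =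
             \int[P]_(o in oX @^-1` B) nu P (oX o) C)%E.
    rewrite [RHS]integral_mkcond; apply: eq_integral => o _; rewrite patchE /=.
    case: (boolP (oX o \in B)) => h.
      have h' : o \in oX @^-1` B by exact: mem_set (set_mem h).
      rewrite h'.
      transitivity (\int[nu P (oX o)]_w (\1_C w)%:E)%E.
        by apply: eq_integral => w _; rewrite indicE h mul1r.
      by rewrite integral_indic // setIT.
    have h' : o \notin oX @^-1` B.
      by apply/negP => /set_mem Bo; move/negP: h; apply; exact: mem_set.
    rewrite (negbTE h').
    transitivity (\int[nu P (oX o)]_w (cst 0%R w)%:E)%E.
      by apply: eq_integral => w _; rewrite indicE (negbTE h) mul0r.
    by rewrite integral0.
  move=> ->.
  have mI : measurable (@oX R _ _ X W @^-1` B `&` @oW R _ _ X W @^-1` C).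
    by apply: measurableI; [exact: (mpre _ moX _ mB) | exact: (mpre _ moW _ mC)].
  transitivity (\int[P]_o (\1_(@oX R _ _ X W @^-1` B `&` @oW R _ _ X W @^-1` C) o)%:E)%E.
    by apply: eq_integral => o _; rewrite indicI.
  by rewrite integral_indic // setIT.
have i1 : PX.-integrable setT (fun x => nu P x C).
  have ic := @finite_measure_integrable_cst _ _ R PX setT 1%R measurableT.
  apply: le_integrable ic => //.
  move=> x _ /=; rewrite gee0_abs; last exact: measure_ge0.
  rewrite normr1 -(prob_kernel (s := nu P) x).
  by apply: le_measure; rewrite ?inE.
have := integral_ae_eq measurableT i1 mp2 (fun E _ mE => key E mE).
case=> N [mN PN sN].
exists (oX @^-1` N); split.
- exact: mpre _ moX _ mN.
- exact: PN.
- move=> o no; apply: sN => hh; apply: no; exact: hh I.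
Qed.

Lemma part1 : @countably_generated _ W -> forall F, cond_dist_version P F ->
  \forall o \ae P, forall C, measurable C -> nu P (oX o) C = F (oX o) C.
Proof.
case=> G hG F hF.
pose H' (s : seq nat) : set W := foldr (fun i A => G i `&` A) setT s.
have mGi : forall i, measurable (G i).
  by move=> i; rewrite hG; apply: sub_sigma_algebra; exists i.
have mH : forall s, measurable (H' s).
  by elim => [|i s ih] /=; [exact: measurableT | exact: measurableI].
have HI : forall s z, foldr (fun i A => G i `&` A) z s = H' s `&` z.
  by elim => [|i s ih] z /=; [rewrite setTI | rewrite ih setIA].
have aeH : forall n, \forall o \ae P, forall s, unpickle n = Some s ->
    nu P (oX o) (H' s) = F (oX o) (H' s).
  move=> n; case: (unpickle n) => [s|].
    by apply: filterS (@part1C F hF _ (mH s)) => o h s' [<-].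
  by apply: aeW => o s'.
have := ae_foralln aeH.
apply: filterS => o h C mC.
have hs : forall s, nu P (oX o) (H' s) = F (oX o) (H' s) :=
  fun s => h (pickle s) s (pickleK s).
have mG : (@measurable _ W) = <<s range H' >>.
  apply/seteqP; split.
    rewrite hG; apply: smallest_sub; first exact: smallest_sigma_algebra.
    move=> _ [i _ <-]; apply: sub_sigma_algebra; exists [:: i] => //=.
    by rewrite setIT.
  apply: smallest_sub; first exact: sigma_algebra_measurable.
  by move=> _ [s _ <-]; exact: mH.
have setIG : setI_closed (range H').
  move=> _ _ [s _ <-] [t _ <-]; exists (s ++ t) => //.
  by rewrite /H' foldr_cat HI.
have Gg : forall i : nat, range H' ((fun=> setT) i) by move=> _; exists [::].
have gcov : \bigcup_k ((fun=> [set: W]) : (set W)^nat) k = [set: W].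
  by apply/seteqP; split => // x _; exists 0%N.
have m1m2 : forall A, range H' A -> nu P (oX o) A = F (oX o) A.
  by move=> _ [s _ <-]; exact: hs.
have m1goo : forall k : nat, (nu P (oX o) ((fun=> setT) k) < +oo)%E.
  by move=> _; rewrite prob_kernel ltry.
exact: (measure_unique (range H') (fun=> setT) mG setIG Gg gcov
  (nu P (oX o)) (F (oX o)) m1m2 m1goo C mC).
Qed.

End final.

End S.

Theorem theorem4 (R : realType) (dX dW : measure_display)
  (X : measurableType dX) (W : measurableType dW)
  (nu : probability (@Obs R _ _ X W) R -> R.-pker X ~> W) :
  @countably_generated _ W ->
  outcome_free nu ->
  (forall (Pf : probability (@Full R _ _ X W) R) (P : probability (@Obs R _ _ X W) R),
      confounder_model Pf -> observed_law Pf P -> positivity P ->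
      forall Q, regression_version P Q -> Psi nu P Q = theta_ATE Pf) ->
  forall P : probability (@Obs R _ _ X W) R, positivity P ->
    (forall F, cond_dist_version P F ->
       {ae P, forall o, forall C, measurable C -> nu P (oX o) C = F (oX o) C}) /\
    (forall Q, regression_version P Q ->
       P.-integrable setT (fun o => (Delta Q (oW o) (oX o))%:E) ->
       Psi nu P Q = (\int[P]_o (Delta Q (oW o) (oX o))%:E)%E).
Proof.
move=> cg ofree H P pos; split.
- move=> F hF; exact: (@part1 R dX dW X W nu ofree H P pos cg F hF).
- move=> Q rQ iQ; exact: (@part2 R dX dW X W nu ofree H P pos Q rQ iQ).
Qed.
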